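(* Let $R$ be a principal ideal domain, let $P$ be a lattice with a compatible abelian group structure, and let $O\subseteq P$. Assume there exists $a\in O$ such that no element of $V_a\cap O$ is a minimal element of $O$, where $V_a=\{x\in P: x\le a\}$. Let $M=\bigoplus_{i\in P}M_i$ be a $P$-graded $R[U_0]$-module such that $M_i$ is a nonzero free $R$-module of finite rank for $i\in O$ and $M_i=0$ for $i\notin O$. Then $M$ is not graded projective.
   Context: A lattice is a poset in which any two elements have a join and a meet; a compatible abelian group structure means $(P,+,0)$ is an abelian group with $a\le b\Rightarrow a+c\le b+c$. $U_0=\{s\in P: s\ge 0\}$ and $R[U_0]$ is the monoid ring of finite sums $\sum_{s\in U_0}c_st^s$ ($c_s\in R$), graded by $\deg(ct^s)=s$; a $P$-graded $R[U_0]$-module is the same as a persistence module over $R$ indexed by $P$. A minimal element of $O$ is $m\in O$ such that no $s\in O$ satisfies $s<m$. Graded projective means a graded direct summand of a graded free $R[U_0]$-module. *)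

(* Defs.v *)
From HB Require Import structures.
From mathcomp Require Import all_boot all_order ssralg.
Set Implicit Arguments. Unset Strict Implicit. Unset Printing Implicit Defensive.
Import Order.TTheory GRing.Theory.
Local Open Scope ring_scope.

(* A lattice carrying an abelian group structure (the compatibility
   axiom a <= b -> a + c <= b + c is a separate hypothesis). *)
#[short(type="latticeZmodType")]
HB.structure Definition LatticeZmod (d : Order.disp_t) :=
  { T of Order.Lattice d T & GRing.Zmodule T }.

Definition order_compatible d (P : latticeZmodType d) : Prop :=
  forall a b c : P, (a <= b)%O -> (a + c <= b + c)%O.

Definition is_ideal (R : comPzRingType) (I : R -> Prop) : Prop :=
  [/\ I 0, (forall x y, I x -> I y -> I (x + y)) & (forall r x, I x -> I (r * x))].

Definition is_principal (R : comPzRingType) (I : R -> Prop) : Prop :=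
  exists a : R, forall x, I x <-> exists r : R, x = r * a.

Definition PID (R : idomainType) : Prop :=
  forall I : R -> Prop, is_ideal I -> is_principal I.

Definition minimal_in d (P : porderType d) (O : P -> Prop) (m : P) : Prop :=
  O m /\ ~ (exists s, O s /\ (s < m)%O).

Definition lin (R : pzRingType) (U V : lmodType R) (f : U -> V) : Prop :=
  forall (a : R) (x y : U), f (a *: x + y) = a *: f x + f y.

(* A P-graded R[U_0]-module, presented as a persistence module over R
   indexed by P: M_i for i in P, and the action of t^(j-i) : M_i -> M_j
   for i <= j (functorial). *)
Record pmod d (P : porderType d) (R : pzRingType) := PMod {
  pobj : P -> lmodType R;
  pmap : forall i j : P, (i <= j)%O -> pobj i -> pobj j;
  pmap_lin : forall i j (h : (i <= j)%O), lin (pmap h);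
  pmap_id : forall i (h : (i <= i)%O) x, pmap h x = x;
  pmap_comp : forall i j k (hij : (i <= j)%O) (hjk : (j <= k)%O) (hik : (i <= k)%O) x,
      pmap hik x = pmap hjk (pmap hij x)
}.
Arguments pmap {d P R} p {i j} _ _.

Definition pext d (P : porderType d) (R : pzRingType) (M : pmod P R) (i j : P)
    (x : pobj M i) : pobj M j :=
  (if (i <= j)%O as b return ((i <= j)%O = b -> pobj M j)
   then fun h => pmap M h x else fun _ => 0) (erefl _).
Arguments pext {d P R} M {i} j x.

Definition pmor d (P : porderType d) (R : pzRingType) (M N : pmod P R) :=
  forall i, pobj M i -> pobj N i.

Definition is_pmor d (P : porderType d) (R : pzRingType) (M N : pmod P R)
    (f : pmor M N) : Prop :=
  (forall i, lin (f i)) /\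
  (forall i j (h : (i <= j)%O) (x : pobj M i), f j (pmap M h x) = pmap N h (f i x)).

(* Graded free R[U_0]-module: free with a homogeneous basis (b_g)_{g in G},
   deg b_g = deg g.  In degree j this says exactly that the elements
   t^(j - deg g) b_g, for deg g <= j, form an R-basis of M_j. *)
Definition graded_free d (P : porderType d) (R : pzRingType) (F : pmod P R) : Prop :=
  exists (G : eqType) (deg : G -> P) (b : forall g : G, pobj F (deg g)),
  forall j : P,
    (forall x : pobj F j, exists (s : seq G) (c : G -> R),
        all (fun g => (deg g <= j)%O) s /\
        x = \sum_(g <- s) c g *: pext F j (b g)) /\
    (forall (s : seq G) (c : G -> R), uniq s -> all (fun g => (deg g <= j)%O) s ->
        \sum_(g <- s) c g *: pext F j (b g) = 0 -> forall g, g \in s -> c g = 0).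

(* M is a graded direct summand of a graded free module: F = M (+) N as
   graded modules, expressed by the biproduct equations. *)
Definition graded_projective d (P : porderType d) (R : pzRingType) (M : pmod P R) : Prop :=
  exists (F N : pmod P R) (iM : pmor M F) (iN : pmor N F) (pM : pmor F M) (pN : pmor F N),
    [/\ graded_free F, is_pmor iM, is_pmor iN, is_pmor pM & is_pmor pN] /\
    [/\ forall i x, pM i (iM i x) = x,
        forall i x, pN i (iN i x) = x,
        forall i x, pM i (iN i x) = 0,
        forall i x, pN i (iM i x) = 0 &
        forall i x, iM i (pM i x) + iN i (pN i x) = x].

Definition nonzero_free_finite_rank (R : pzRingType) (V : lmodType R) : Prop :=
  exists n : nat, (0 < n)%N /\ exists b : 'I_n -> V,
    forall x : V, exists! c : {ffun 'I_n -> R}, x = \sum_(k < n) c k *: b k.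

(* Main.v *)
Require Import Defs.
From HB Require Import structures.
From mathcomp Require Import all_boot all_order ssralg.
From Stdlib Require Import Classical.
Set Implicit Arguments. Unset Strict Implicit. Unset Printing Implicit Defensive.
Import Order.TTheory GRing.Theory.
Local Open Scope ring_scope.
Local Notation pmap := Defs.pmap.

Lemma sum_single (V : zmodType) (G : eqType) (U : seq G) (y : G) (A : V) :
  y \in U -> uniq U -> \sum_(x <- U) (if y == x then A else 0) = A.
Proof.
move=> yU uU; rewrite (bigD1_seq y) //= eqxx big1 ?addr0 // => x.
by rewrite eq_sym => /negbTE ->.
Qed.

Lemma regroup (R : pzRingType) (V : lmodType R) (G : eqType) (L : seq (G * R))
  (w : G -> V) (P : pred G) :
  \sum_(p <- L | P p.1) p.2 *: w p.1 =
  \sum_(x <- undup (map fst L) | P x) (\sum_(p <- L | p.1 == x) p.2) *: w x.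
Proof.
rewrite big_mkcond /=.
transitivity (\sum_(p <- L) \sum_(x <- undup (map fst L))
   (if p.1 == x then (if P p.1 then p.2 *: w p.1 else 0) else 0)).
  apply: eq_big_seq => p pL; rewrite sum_single ?undup_uniq //.
  by rewrite mem_undup; apply: map_f.
rewrite exchange_big /= [RHS]big_mkcond /=; apply: eq_bigr => x _.
case: ifP => Px.
  rewrite scaler_suml [RHS]big_mkcond /=; apply: eq_bigr => p _.
  by case: eqP => // ->; rewrite Px.
by rewrite big1 // => p _; case: eqP => // ->; rewrite Px.
Qed.

Section Lin.
Variables (R : pzRingType) (U V : lmodType R) (f : U -> V) (hf : lin f).
Lemma lin0 : f 0 = 0.
Proof. have := hf 1 0 0; rewrite !scale1r addr0 => E. apply: (@addrI _ (f 0)). by rewrite addr0 {3}E. Qed.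
Lemma linD x y : f (x + y) = f x + f y.
Proof. by have := hf 1 x y; rewrite !scale1r. Qed.
Lemma linZ a x : f (a *: x) = a *: f x.
Proof. by have := hf a x 0; rewrite !addr0 lin0 addr0. Qed.
Lemma lin_sum (I : Type) (r : seq I) (F : I -> U) :
  f (\sum_(i <- r) F i) = \sum_(i <- r) f (F i).
Proof.
elim: r => [|i r IH]; first by rewrite !big_nil lin0.
by rewrite !big_cons linD IH.
Qed.
End Lin.

Section Pext.
Variables (d : Order.disp_t) (P : porderType d) (R : pzRingType) (M : pmod P R).

Lemma pextE i j (h : (i <= j)%O) (x : pobj M i) : pext M j x = pmap M h x.
Proof.
rewrite /pext; move: (erefl (i <= j)%O).
have E : forall b (e : (i <= j)%O = b),
   (if b as b0 return ((i <= j)%O = b0 -> pobj M j)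
    then fun h => pmap M h x else fun _ => 0) e = pmap M h x.
  by move=> b; case: b => e; [rewrite (bool_irrelevance e h) | rewrite h in e].
exact: E.
Qed.

Lemma pext_push i s a (his : (i <= s)%O) (hsa : (s <= a)%O) (x : pobj M i) :
  pmap M hsa (pext M s x) = pext M a x.
Proof.
by rewrite (pextE his) (pextE (le_trans his hsa)) (pmap_comp his hsa (le_trans his hsa)).
Qed.
End Pext.

Lemma indep_dup (R : pzRingType) (V : lmodType R) (G : eqType) (v : G -> V)
  (Q : pred G)
  (hind : forall (s : seq G) (c : G -> R), uniq s -> all Q s ->
        \sum_(g <- s) c g *: v g = 0 -> forall g, g \in s -> c g = 0)
  (L : seq (G * R)) :
  all (fun p => Q p.1) L -> \sum_(p <- L) p.2 *: v p.1 = 0 ->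
  forall x, \sum_(p <- L | p.1 == x) p.2 = 0.
Proof.
move=> hL h0 x.
have := regroup L v xpredT; rewrite h0 => /esym h1.
case xL: (x \in undup (map fst L)).
  apply: (hind _ (fun x => \sum_(p <- L | p.1 == x) p.2)) h1 _ xL.
    exact: undup_uniq.
  apply/allP => g; rewrite mem_undup => /mapP [p pL ->].
  by move/allP: hL => /(_ p pL).
rewrite big1_seq // => p /andP [/eqP px pL].
by move: xL; rewrite mem_undup -px map_f.
Qed.

Lemma min_in_list d (P : porderType d) (G : eqType) (f : G -> P) (T : seq G) :
  T != [::] -> exists2 m, m \in T & forall g, g \in T -> ~~ (f g < f m)%O.
Proof.
elim: T => // x T IH _.
case T0: (T == [::]).
  move/eqP: T0 => ->; exists x; first by rewrite inE.
  by move=> g; rewrite inE => /eqP ->; rewrite ltxx.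
case: (IH (negbT T0)) => m mT hm.
case xm: (f x < f m)%O.
  exists x; first by rewrite inE eqxx.
  move=> g; rewrite inE => /orP [/eqP ->|gT]; first by rewrite ltxx.
  apply/negP => gx; move: (hm g gT); by rewrite (lt_trans gx xm).
exists m; first by rewrite inE mT orbT.
move=> g; rewrite inE => /orP [/eqP ->|gT]; [by rewrite xm | exact: hm].
Qed.

Theorem lemma5p1 (d : Order.disp_t) (P : latticeZmodType d) (R : idomainType)
  (hR : PID R) (hP : order_compatible P) (O : P -> Prop)
  (hO : exists a : P, O a /\ forall x : P, (x <= a)%O -> O x -> ~ minimal_in O x)
  (M : pmod P R)
  (hMO : forall i : P, O i -> nonzero_free_finite_rank (pobj M i))
  (hMnO : forall i : P, ~ O i -> forall x : pobj M i, x = 0%R) :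
  ~ graded_projective M.
Proof.
case: hO => a [Oa hA].
case=> F [N [iM [iN [pM [pN [[[G [deg [b hb]]] [iMl iMc] _ [pMl pMc] _] [hpi _ _ _ _]]]]]]].
pose v j g := pext F j (b g).
case: (hMO a Oa) => n [n0 [e he]].
have: forall k : 'I_n, exists sc : seq G * (G -> R),
    all (fun g => (deg g <= a)%O) sc.1 /\
    iM a (e k) = \sum_(g <- sc.1) sc.2 g *: v a g.
  move=> k; case: ((hb a).1 (iM a (e k))) => s [c [h1 h2]].
  by exists (s, c).
case/fin_all_exists => sc hsc.
pose S := flatten [seq (sc k).1 | k <- index_enum 'I_n].
have Sdeg : forall g, g \in S -> (deg g <= a)%O.
  move=> g /flattenP [l /mapP [k _ ->] gl].
  by case: (hsc k) => /allP /(_ g gl).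
pose T := [seq g <- undup S | pM (deg g) (b g) != 0].
have claim : forall s, O s -> (s <= a)%O -> exists2 g, g \in T & (deg g <= s)%O.
  move=> s Os hsa.
  have [y y0] : exists y : pobj M s, y != 0.
    case: (hMO s Os) => n' [n'0 [e' he']].
    exists (e' (Ordinal n'0)); apply/eqP => E.
    case: (he' 0) => c [_ hu].
    have h1 : c = [ffun=> 0].
      apply: hu; rewrite big1 // => k _; by rewrite ffunE scale0r.
    have h2 : c = [ffun k => (k == Ordinal n'0)%:R].
      apply: hu; rewrite (bigD1 (Ordinal n'0)) //= ffunE eqxx scale1r E.
      rewrite big1 ?addr0 // => k /negbTE kn; by rewrite ffunE kn scale0r.
    have := congr1 (fun f : {ffun 'I_n' -> R} => f (Ordinal n'0)) (etrans (esym h1) h2).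
    by rewrite /= !ffunE eqxx => /eqP; rewrite eq_sym oner_eq0.
  case: ((hb s).1 (iM s y)) => s' [c' [hs' ey]].
  pose L' := [seq (g, c' g) | g <- s'].
  case: (he (pmap M hsa y)) => r [er _].
  pose L := flatten [seq [seq (g, r k * (sc k).2 g) | g <- (sc k).1] | k <- index_enum 'I_n].
  have LS : forall p, p \in L -> p.1 \in S.
    move=> p /flattenP [l /mapP [k _ ->] /mapP [g gl ->]] /=.
    by apply/flattenP; exists (sc k).1 => //; apply: map_f; rewrite mem_index_enum.
  have eqF : \sum_(p <- L') p.2 *: v a p.1 = \sum_(p <- L) p.2 *: v a p.1.
    rewrite big_map.
    transitivity (pmap F hsa (iM s y)).
      rewrite ey (lin_sum (pmap_lin hsa)).
      apply: eq_big_seq => g gs'.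
      by rewrite (linZ (pmap_lin hsa)) /v (pext_push (allP hs' g gs') hsa).
    rewrite -iMc er (lin_sum (iMl a)) big_flatten big_map.
    apply: eq_bigr => k _; rewrite big_map (linZ (iMl a)) (hsc k).2 scaler_sumr.
    by apply: eq_bigr => g _; rewrite scalerA.
  have coef0 : forall x, x \notin S -> \sum_(p <- L' | p.1 == x) p.2 = 0.
    move=> x xS.
    have hall : all (fun p => (fun g => (deg g <= a)%O) p.1) (L' ++ [seq (p.1, - p.2) | p <- L]).
      rewrite all_cat; apply/andP; split.
        apply/allP => p /mapP [g gs' ->] /=.
        exact: le_trans (allP hs' g gs') hsa.
      by apply/allP => p /mapP [q qL ->] /=; apply: Sdeg; apply: LS.
    have hsum : \sum_(p <- L' ++ [seq (p.1, - p.2) | p <- L]) p.2 *: v a p.1 = 0.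
      rewrite big_cat (big_map (fun p : G * R => (p.1, - p.2))) /=.
      rewrite eqF -big_split /= big1 // => p _; by rewrite scaleNr subrr.
    have h := @indep_dup _ _ _ (v a) (fun g => (deg g <= a)%O) ((hb a).2) _ hall hsum.
    have z : \sum_(p <- [seq (p.1, - p.2) | p <- L] | p.1 == x) p.2 = 0.
      rewrite big1_seq // => p /andP [/eqP px /mapP [q qL pq]].
      by move: xS; rewrite -px pq /= LS.
    by move: (h x); rewrite big_cat z /= addr0.
  pose w g := pext M s (pM (deg g) (b g)).
  have ey' : y = \sum_(p <- L') p.2 *: w p.1.
    rewrite -{1}(hpi s y) ey (lin_sum (pMl s)) big_map; apply: eq_big_seq => g gs'.
    by rewrite (linZ (pMl s)) /w /v (pextE (allP hs' g gs')) (pextE (allP hs' g gs')) pMc.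
  have : has (fun g => (deg g <= s)%O) T; last by case/hasP => g gT gs; exists g.
  apply/negPn/negP => /hasPn H.
  move/eqP: y0; apply; rewrite ey' (bigID (fun p => p.1 \in S)) /=.
  have -> : \sum_(p <- L' | p.1 \notin S) p.2 *: w p.1 = 0.
    rewrite (regroup L' w (fun x => x \notin S)) big1 // => x xS.
    by rewrite coef0 // scale0r.
  rewrite addr0 big1_seq // => p /andP [pS /mapP [g gs' pe]].
  rewrite pe /= in pS *.
  have gs := allP hs' g gs'.
  have pM0 : pM (deg g) (b g) = 0.
    apply/eqP; apply: (contraTT _ gs) => pg; apply: H.
    by rewrite mem_filter pg mem_undup pS.
  by rewrite /w pM0 (pextE gs) (lin0 (pmap_lin gs)) scaler0.
case: (claim a Oa (lexx a)) => g0 g0T _.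
have T0 : T != [::] by apply/eqP => T0; rewrite T0 in g0T.
case: (min_in_list deg T0) => m mT hm.
move: (mT); rewrite mem_filter mem_undup => /andP [pm mS].
have ma := Sdeg m mS.
have Om : O (deg m).
  apply: NNPP => nO; move/eqP: pm; apply; exact: hMnO.
have [s [Os sm]] : exists s, O s /\ (s < deg m)%O.
  apply: NNPP => H; apply: (hA _ ma Om); split => //.
case: (claim s Os (le_trans (ltW sm) ma)) => g gT gs.
by move: (hm g gT); rewrite (le_lt_trans gs sm).
Qed.
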